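(* Let $A,B,C$ be $N\times N$ real symmetric positive semidefinite matrices and $0\leq k\leq N$. Then \[ e_{k}(A)+e_{k}(B)+e_{k}(C)+e_{k}(A+B+C)\geq e_{k}(A+B)+e_{k}(B+C)+e_{k}(C+A), \] where $e_{k}(X)$ denotes the $k$-th elementary symmetric function of the eigenvalues of $X$. *)

(* Defs.v *)
From HB Require Import structures.
From mathcomp Require Import all_boot all_order all_algebra.
From Stdlib Require Import ClassicalEpsilon.
Set Implicit Arguments. Unset Strict Implicit. Unset Printing Implicit Defensive.
Import Order.TTheory GRing.Theory Num.Theory.
Local Open Scope ring_scope.

Definition psd {R : realFieldType} {N : nat} (A : 'M[R]_N) : Prop :=
  A^T = A /\ forall v : 'rV[R]_N, 0 <= (v *m A *m v^T) 0 0.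

Definition is_eigen_seq {R : rcfType} {N : nat} (A : 'M[R]_N) (s : seq R) : Prop :=
  char_poly A = \prod_(x <- s) ('X - x%:P).

(* a choice of the eigenvalue list (exists for real symmetric matrices) *)
Definition eigvals {R : rcfType} {N : nat} (A : 'M[R]_N) : seq R :=
  epsilon (inhabits [::]) (fun s => is_eigen_seq A s).

Definition esym {R : rcfType} (k : nat) (s : seq R) : R :=
  \sum_(I : {set 'I_(size s)} | #|I| == k) \prod_(i in I) s`_i.

Definition ek {R : rcfType} {N : nat} (k : nat) (X : 'M[R]_N) : R :=
  esym k (eigvals X).

(* Main.v *)
Require Import Defs.
From HB Require Import structures.
From mathcomp Require Import all_boot all_order all_algebra all_fingroup zify ring lra.
Set Implicit Arguments. Unset Strict Implicit. Unset Printing Implicit Defensive.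
Import Order.TTheory GRing.Theory Num.Theory.
Local Open Scope ring_scope.
From mathcomp Require Import complex.
From Stdlib Require Import ClassicalEpsilon.

Definition msk {R : nzRingType} {n : nat} (S : {set 'I_n}) (M : 'M[R]_n) : 'M[R]_n :=
  \matrix_(i, j) if i \in S then M i j else (i == j)%:R.

Lemma det_diag_add (R : comNzRingType) n (d : 'I_n -> R) (M : 'M[R]_n) :
  \det (\matrix_(i, j) (M i j + d i *+ (i == j))) =
  \sum_(S : {set 'I_n}) (\prod_(i in ~: S) d i) * \det (msk S M).
Proof.
rewrite /determinant.
have E (s : 'S_n) : \prod_i (\matrix_(i, j) (M i j + d i *+ (i == j))) i (s i) =
  \sum_(S : {set 'I_n}) (\prod_(i in ~: S) d i) * \prod_i (msk S M) i (s i).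
  rewrite (eq_bigr (fun i => M i (s i) + d i *+ (i == s i))); last by move=> i _; rewrite mxE.
  rewrite bigA_distr; apply: eq_bigr => S _.
  rewrite (_ : \prod_(i in ~: S) d i = \prod_i (if i \in S then 1 else d i)); last first.
    by rewrite big_mkcond; apply eq_bigr => i _; rewrite in_setC; case: (i \in S).
  rewrite -big_split /=; apply: eq_bigr => i _; rewrite /msk mxE; case: (i \in S); by rewrite ?mul1r // mulr_natr.
transitivity (\sum_(s : 'S_n) \sum_(S : {set 'I_n}) (-1) ^+ s * ((\prod_(i in ~: S) d i) * \prod_i (msk S M) i (s i))).
  by apply: eq_bigr => s _; rewrite E mulr_sumr.
rewrite exchange_big /=; apply: eq_bigr => S _.
rewrite mulr_sumr; apply: eq_bigr => s _.
by rewrite mulrCA.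
Qed.

Definition Ek {R : comNzRingType} {n : nat} (k : nat) (M : 'M[R]_n) : R :=
  (-1) ^+ k * (char_poly M)`_(n - k).

Lemma det_msk_opp (R : comNzRingType) n (S : {set 'I_n}) (M : 'M[R]_n) :
  \det (msk S (- M)) = (-1) ^+ #|S| * \det (msk S M).
Proof.
have -> : msk S (- M) = diag_mx (\row_i (if i \in S then -1 else 1)) *m msk S M.
  apply/matrixP => i j; rewrite mul_diag_mx !mxE; case: (i \in S); rewrite ?mulN1r ?mul1r //.
rewrite det_mulmx det_diag; congr (_ * _).
rewrite (eq_bigr (fun i => if i \in S then -1 else 1)); last by move=> i _; rewrite mxE.
by rewrite -big_mkcond /= prodr_const.
Qed.

Lemma Ek_minors (R : comNzRingType) n k (M : 'M[R]_n) : (k <= n)%N ->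
  Ek k M = \sum_(S : {set 'I_n} | #|S| == k) \det (msk S M).
Proof.
move=> kn; rewrite /Ek.
have -> : char_poly M = \det (\matrix_(i, j) (map_mx polyC (- M) i j + 'X *+ (i == j))).
  rewrite /char_poly /char_poly_mx; congr (\det _); apply/matrixP => i j.
  by rewrite !mxE addrC raddfN.
rewrite det_diag_add coef_sum.
rewrite mulr_sumr [RHS]big_mkcond /=; apply: eq_bigr => S _.
rewrite prodr_const.
have -> : msk S (map_mx polyC (- M)) = map_mx polyC (msk S (- M)).
  by apply/matrixP => i j; rewrite !mxE; case: (i \in S); rewrite ?rmorph_nat.
rewrite det_map_mx /= coefMC coefXn det_msk_opp.
have cS : #|~: S| = (n - #|S|)%N by have := cardsC S; rewrite card_ord; lia.
rewrite cS; have [Sk|Sk] := eqVneq #|S| k.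
  by rewrite Sk eqxx mul1r mulrA -exprD -signr_odd oddD addbb mul1r.
have -> : (n - k == n - #|S|)%N = false.
  apply/negP => /eqP H; move/eqP: Sk; apply.
  have Sn : (#|S| <= n)%N by rewrite -[X in (_ <= X)%N]card_ord max_card.
  apply/eqP; lia.
by rewrite mul0r mulr0.
Qed.

Lemma det_msk_eq (R : comNzRingType) n (S : {set 'I_n}) (M M' : 'M[R]_n) :
  (forall i j, i \in S -> j \in S -> M i j = M' i j) -> \det (msk S M) = \det (msk S M').
Proof.
move=> E; rewrite /determinant; apply: eq_bigr => s _; congr (_ * _).
have [/forallP H | /forallPn [i Hi]] := boolP [forall i, (i \notin S) ==> (s i == i)].
  apply: eq_bigr => i _; rewrite !mxE; case: ifP => iS //; apply: E => //.
  apply/negPn/negP => siS; have := H (s i); rewrite siS /= => /eqP /perm_inj si.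
  by move: iS; rewrite -si (negbTE siS).
move: Hi; rewrite negb_imply => /andP [iS si].
have si' : (i == s i) = false by apply/negbTE; rewrite eq_sym.
by rewrite (bigD1 i) //= [RHS](bigD1 i) //= !mxE (negbTE iS) si' !mul0r.
Qed.

Lemma det_msk_zero (R : comNzRingType) n (S : {set 'I_n}) (M : 'M[R]_n) i :
  i \in S -> (forall j, M i j = 0) -> \det (msk S M) = 0.
Proof.
move=> iS Mi; rewrite /determinant big1 // => s _.
by rewrite (bigD1 i) //= mxE iS Mi mul0r mulr0.
Qed.

Lemma char_poly_swap (R : comNzRingType) n m (X : 'M[R]_(n, m)) (Y : 'M[R]_(m, n)) :
  char_poly (Y *m X) * 'X^n = char_poly (X *m Y) * 'X^m.
Proof.
pose Xp := map_mx polyC X; pose Yp := map_mx polyC Y.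
pose M := block_mx (1%:M : 'M_n) Xp Yp ('X%:M : 'M_m).
pose L1 := block_mx (1%:M : 'M_n) 0 (- Yp) (1%:M : 'M_m).
pose R1 := block_mx ('X%:M : 'M_n) 0 (- Yp) (1%:M : 'M_m).
have e1 : L1 *m M = block_mx 1%:M Xp 0 (char_poly_mx (Y *m X)).
  rewrite /L1 /M mulmx_block !mul1mx !mul0mx !addr0 mulmx1 mulNmx addNr.
  by rewrite /char_poly_mx map_mxM addrC.
have e2 : M *m R1 = block_mx (char_poly_mx (X *m Y)) Xp 0 ('X%:M).
  rewrite /R1 /M mulmx_block !mul1mx !mulmx0 !mulmx1 !add0r !mulmxN mul_mx_scalar mul_scalar_mx addrN.
  congr block_mx.
  by rewrite /char_poly_mx map_mxM.
have d1 : \det (L1 *m M) = char_poly (Y *m X).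
  by rewrite e1 det_ublock det1 mul1r.
have d2 : \det (M *m R1) = char_poly (X *m Y) * 'X^m.
  by rewrite e2 det_ublock det_scalar.
move: d1 d2; rewrite !det_mulmx /L1 /R1 !det_lblock !det1 !mul1r !mulr1 det_scalar => ->.
by rewrite mulrC.
Qed.

Lemma Ek_swap (R : comNzRingType) n m (X : 'M[R]_(n, m)) (Y : 'M[R]_(m, n)) k :
  (k <= n)%N -> (k <= m)%N -> Ek k (X *m Y) = Ek k (Y *m X).
Proof.
move=> kn km; rewrite /Ek; congr (_ * _).
have := congr1 (fun p : {poly R} => p`_(n + m - k)) (char_poly_swap X Y).
rewrite /= !coefMXn.
have -> : (n + m - k < n)%N = false by apply/negbTE; rewrite -leqNgt; lia.
have -> : (n + m - k < m)%N = false by apply/negbTE; rewrite -leqNgt; lia.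
have -> : (n + m - k - n = m - k)%N by lia.
have -> : (n + m - k - m = n - k)%N by lia.
by move=> ->.
Qed.

Lemma herm_eig_real (C : numClosedFieldType) n (A : 'M[C]_n) (z : C) (v : 'rV[C]_n) :
  A^T = A -> map_mx Num.conj A = A -> v != 0 -> v *m A = z *: v -> z^* = z.
Proof.
move=> At Ac v0 vA.
pose w := map_mx Num.conj v.
pose q := (v *m A *m w^T) 0 0.
pose s := (v *m w^T) 0 0.
have qz : q = z * s by rewrite /q /s vA -scalemxAl mxE.
have qc : q^* = q.
  have -> : q^* = (map_mx Num.conj (v *m A *m w^T)) 0 0 by rewrite mxE.
  have wK : map_mx Num.conj w^T = v^T by apply/matrixP => i j; rewrite !mxE conjCK.
  rewrite !map_mxM Ac wK -/w.
  have tr00 (M : 'M[C]_1) : M 0 0 = M^T 0 0 by rewrite mxE.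
  by rewrite tr00 !trmx_mul trmxK At mulmxA.
have sc : s^* = s.
  rewrite /s !mxE rmorph_sum; apply: eq_bigr => j _.
  by rewrite !mxE rmorphM /= conjCK mulrC.
have s0 : s != 0.
  rewrite /s mxE; apply/negP => /eqP H.
  have : forall j, v 0 j * (v 0 j)^* = 0.
    move=> j; apply/eqP; rewrite eq_le mul_conjC_ge0 andbT.
    have := H; rewrite (bigD1 j) //= !mxE => E.
    rewrite -[X in X <= _]addr0 -[X in _ <= X]E lerD2l.
    by apply: sumr_ge0 => i _; rewrite !mxE mul_conjC_ge0.
  move=> H2; move/negP: v0; apply; apply/eqP/matrixP => i j.
  rewrite (ord1 i) mxE; apply/eqP; rewrite -mul_conjC_eq0 H2.
  by [].
have : (z - z^*) * s = 0.
  by rewrite mulrBl -qz -sc -rmorphM /= -qz qc subrr.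
by move/eqP; rewrite mulf_eq0 (negbTE s0) orbF subr_eq0 => /eqP.
Qed.

Lemma sym_split (R : rcfType) n (A : 'M[R]_n) : A^T = A ->
  exists s : seq R, char_poly A = \prod_(x <- s) ('X - x%:P).
Proof.
move=> At.
pose f := real_complex R.
pose Ac := map_mx f A.
have [rs Hrs] := closed_field_poly_normal (char_poly Ac).
rewrite (monicP (char_poly_monic Ac)) scale1r in Hrs.
have fr x : f x \is Num.real by rewrite complex_real.
have real_rs z : z \in rs -> f (Re z) = z.
  move=> zin; have : root (char_poly Ac) z by rewrite Hrs root_prod_XsubC zin.
  rewrite -eigenvalue_root_char => /eigenvalueP [v vA v0].
  have Act : Ac^T = Ac by rewrite /Ac map_trmx At.
  have Acc : map_mx Num.conj Ac = Ac.
    by apply/matrixP => i j; rewrite !mxE conj_Creal.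
  have zc := herm_eig_real Act Acc v0 vA.
  by apply: RRe_real; rewrite CrealE zc.
exists (map (@Re R) rs).
apply: (@map_poly_inj _ _ f); rewrite map_char_poly -/Ac Hrs map_prod_XsubC big_map.
by apply: eq_big_seq => z zin; congr (_ - _%:P); symmetry; exact: real_rs.
Qed.

Lemma ek_Ek (R : rcfType) n k (A : 'M[R]_n) : A^T = A -> (k <= n)%N -> ek k A = Ek k A.
Proof.
move=> At kn.
have [s0 Hs0] := sym_split At.
have : is_eigen_seq A (eigvals A).
  rewrite /eigvals; apply: epsilon_spec; by exists s0.
rewrite /is_eigen_seq => Hs.
have sz : size (eigvals A) = n.
  have := size_char_poly A; rewrite Hs size_prod_XsubC; by case.
rewrite /ek /Ek Hs coef_prod_XsubC sz; last by rewrite leq_subr.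
have -> : (n - (n - k) = k)%N by lia.
rewrite mulrA -exprD -signr_odd oddD addbb mul1r /esym.
by move: (eigvals A) sz => e esz; subst n.
Qed.

Lemma psd_det (R : rcfType) n (H : 'M[R]_n) : psd H -> 0 <= \det H.
Proof.
move=> [Ht Hq].
have [s Hs] := sym_split Ht.
have sge0 x : x \in s -> 0 <= x.
  move=> xin; have : root (char_poly H) x by rewrite Hs root_prod_XsubC xin.
  rewrite -eigenvalue_root_char => /eigenvalueP [v vH v0].
  have := Hq v; rewrite vH -scalemxAl mxE.
  have vv : 0 < (v *m v^T) 0 0.
    rewrite mxE; have [j vj] : exists j, v 0 j != 0.
      apply/existsP; move: v0; apply: contraR; rewrite negb_exists => /forallP H0.
      apply/eqP/matrixP => i j; rewrite (ord1 i) mxE; apply/eqP; move: (H0 j); by rewrite negbK.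
    rewrite (bigD1 j) //= ltr_pwDl //.
      by rewrite mxE -expr2 lt_def sqrf_eq0 vj sqr_ge0.
    by apply: sumr_ge0 => i _; rewrite mxE -expr2 sqr_ge0.
  by rewrite pmulr_lge0.
have sz : size s = n.
  have := size_char_poly H; rewrite Hs size_prod_XsubC; by case.
have := char_poly_det H; rewrite Hs coef0_prod_XsubC sz => /(can_inj (signrMK n)) <-.
by rewrite big_seq prodr_ge0.
Qed.

Lemma chol_step (R : rcfType) n (A : 'M[R]_(1 + n)) :
  (forall B : 'M[R]_n, psd B -> exists P : 'M[R]_n, B = P *m P^T) -> psd A -> exists P : 'M[R]_(1 + n), A = P *m P^T.
Proof.
move=> IH [At Aq].
have Ablk : A = block_mx ((ulsubmx A) 0 0)%:M (ursubmx A) (ursubmx A)^T (drsubmx A).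
  by rewrite -{1}[A]submxK -mx11_scalar trmx_ursub At.
move: Ablk; set a := (ulsubmx A) 0 0; set b := ursubmx A; set d := drsubmx A => Ablk.
have dt : d^T = d by rewrite /d trmx_drsub At.
have quad (x : R) (v : 'rV[R]_n) : ((row_mx x%:M v) *m A *m (row_mx x%:M v)^T) 0 0 =
    x * x * a + 2 * x * (b *m v^T) 0 0 + (v *m d *m v^T) 0 0.
  rewrite Ablk mul_row_block tr_row_mx mul_row_col tr_scalar_mx !mul_scalar_mx !mul_mx_scalar.
  rewrite !mulmxDl -!scalemxAl !mxE eqxx /= mulr1n.
  have -> : \sum_(j < n) v 0 j * b^T j 0 = \sum_(j < n) b 0 j * v^T j 0 by apply: eq_bigr => j _; rewrite !mxE mulrC.
  ring.
have m11 (X Y : 'M[R]_1) : (X *m Y) 0 0 = X 0 0 * Y 0 0 by rewrite mxE big_ord1.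
have a0 : 0 <= a.
  have := Aq (row_mx 1%:M 0); rewrite quad trmx0 mulmx0 mul0mx !mxE.
  by rewrite big1 ?mulr0 ?addr0 ?mul1r // => j _; rewrite mxE mul0r.
have bb : (b *m b^T) 0 0 = 0 -> b = 0.
  rewrite mxE => H; apply/matrixP => i j; rewrite (ord1 i) mxE.
  have Hnn : forall k : 'I_n, true -> 0 <= b 0 k * b^T k 0 by move=> k _; rewrite !mxE -expr2 sqr_ge0.
  have := psumr_eq0P Hnn H isT (i := j); rewrite !mxE => /eqP.
  by rewrite -expr2 sqrf_eq0 => /eqP.
have bz : a = 0 -> b = 0.
  move=> a00; have [/bb //|bn] := eqVneq ((b *m b^T) 0 0) 0.
  set beta := (b *m b^T) 0 0 in bn *; set gam := (b *m d *m b^T) 0 0.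
  have := Aq (row_mx (- (gam + 1) / (2 * beta))%:M b); rewrite quad a00 -/beta -/gam.
  have -> : - (gam + 1) / (2 * beta) * (- (gam + 1) / (2 * beta)) * 0 + 2 * (- (gam + 1) / (2 * beta)) * beta + gam = -1.
    by field.
  by rewrite ler0N1.
pose S := d - a^-1 *: (b^T *m b).
have Spsd : psd S.
  split.
    by rewrite /S linearB /= linearZ /= trmx_mul trmxK dt.
  move=> v.
  have vb : (v *m b^T) 0 0 = (b *m v^T) 0 0.
    by rewrite !mxE; apply: eq_bigr => j _; rewrite !mxE mulrC.
  have -> : (v *m S *m v^T) 0 0 = (v *m d *m v^T) 0 0 - a^-1 * ((b *m v^T) 0 0) ^+ 2.
    rewrite /S mulmxBr mulmxBl -scalemxAr -scalemxAl.
    have H (X Y : 'M[R]_1) c : (X - c *: Y) 0 0 = X 0 0 - c * Y 0 0 by rewrite !mxE.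
    rewrite H.
    by rewrite mulmxA -[v *m b^T *m b *m v^T]mulmxA m11 vb expr2.
  have [a00|an] := eqVneq a 0.
    have := Aq (row_mx 0%:M v); rewrite quad a00 invr0 !mul0r mulr0 !add0r.
    by rewrite mul0r add0r subr0.
  have := Aq (row_mx (- (a^-1 * (b *m v^T) 0 0))%:M v); rewrite quad.
  set beta := (b *m v^T) 0 0; set gam := (v *m d *m v^T) 0 0.
  suff -> : - (a^-1 * beta) * - (a^-1 * beta) * a + 2 * - (a^-1 * beta) * beta + gam = gam - a^-1 * beta ^+ 2 by [].
  by field.
have [P' SP] := IH S Spsd.
pose r := Num.sqrt a.
have rr : r * r = a by rewrite -expr2 sqr_sqrtr.
exists (block_mx r%:M 0 (r^-1 *: b^T) P').
rewrite Ablk tr_block_mx mulmx_block !trmx0 !mulmx0 !addr0 !tr_scalar_mx.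
have rb : r * r^-1 *: b = b.
  have [a00|an] := eqVneq a 0; first by rewrite (bz a00) scaler0.
  rewrite mulfV ?scale1r //; apply/eqP => r0; move/eqP: an; apply; by rewrite -rr r0 mul0r.
have trZ (c : R) (X : 'M[R]_(n, 1)) : (c *: X)^T = c *: X^T by apply/matrixP => i j; rewrite !mxE.
have trZ' (c : R) (X : 'M[R]_(1, n)) : (c *: X)^T = c *: X^T by apply/matrixP => i j; rewrite !mxE.
congr block_mx.
- by rewrite -scalar_mxM rr.
- by rewrite mul0mx addr0 trZ trmxK mul_scalar_mx scalerA rb.
- rewrite -scalemxAl mul_mx_scalar scalerA mulrC.
  by have := congr1 trmx rb; rewrite trZ' => ->.
- rewrite -SP /S trZ trmxK -scalemxAl -scalemxAr scalerA -invfM rr.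
  by rewrite addrC subrK.
Qed.

Lemma psd_chol (R : rcfType) n (A : 'M[R]_n) : psd A -> exists P : 'M[R]_n, A = P *m P^T.
Proof.
elim: n A => [|n IH] A HA.
  by exists 0; apply/matrixP => [[]].
exact: (@chol_step R n A IH HA).
Qed.

Lemma psd_gram (R : rcfType) n m (Y : 'M[R]_(n, m)) : psd (Y *m Y^T).
Proof.
split; first by rewrite trmx_mul trmxK.
move=> v; have -> : v *m (Y *m Y^T) *m v^T = (v *m Y) *m (v *m Y)^T.
  by rewrite trmx_mul !mulmxA.
by rewrite mxE; apply: sumr_ge0 => i _; rewrite !mxE -expr2 sqr_ge0.
Qed.

Lemma psd_add (R : rcfType) n (X Y : 'M[R]_n) : psd X -> psd Y -> psd (X + Y).
Proof.
move=> [Xt Xq] [Yt Yq]; split; first by rewrite linearD /= Xt Yt.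
by move=> v; rewrite mulmxDr mulmxDl mxE addr_ge0.
Qed.

Lemma minor_ge0 (R : rcfType) N m (W : 'M[R]_(N, m)) (T : {set 'I_m}) :
  0 <= \det (msk T (W^T *m W)).
Proof.
pose G := W^T *m W.
pose H := \matrix_(i, j) if (i \in T) && (j \in T) then G i j else (i == j)%:R.
have -> : \det (msk T (W^T *m W)) = \det H.
  rewrite (@det_msk_eq _ _ T _ H); last by move=> i j iT jT; rewrite [H i j]mxE iT jT.
  congr (\det _); apply/matrixP => i j; rewrite !mxE.
  by case: (i \in T).
pose d := \row_i ((i \in T)%:R : R); pose e := \row_i ((i \notin T)%:R : R).
have -> : H = (diag_mx d *m W^T) *m (diag_mx d *m W^T)^T + diag_mx e *m (diag_mx e)^T.
  rewrite trmx_mul trmxK !tr_diag_mx; apply/matrixP => i j.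
  rewrite [RHS]mxE mulmxA mul_mx_diag -mulmxA mul_diag_mx -/G mul_diag_mx [H i j]mxE !mxE.
  case iT: (i \in T); case jT: (j \in T); rewrite /= ?mul1r ?mulr1 ?mul0r ?mulr0 ?addr0 ?add0r //.
  apply/eqP; rewrite pnatr_eq0 eqb0; apply/eqP => ij.
  by move: iT jT; rewrite ij => ->.
exact: (psd_det (psd_add (psd_gram _) (psd_gram _))).
Qed.

Definition memb N (ca cb cc : bool) (i : 'I_(N + N + N)) : bool :=
  if (i < N)%N then ca else if (i < N + N)%N then cb else cc.

Lemma Xc_diag (R : rcfType) N (P Q Sm : 'M[R]_N) (ca cb cc : bool) :
  row_mx (row_mx (ca%:R *: P) (cb%:R *: Q)) (cc%:R *: Sm) =
  row_mx (row_mx P Q) Sm *m diag_mx (\row_i ((memb ca cb cc i)%:R : R)).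
Proof.
apply/matrixP => k i; rewrite mul_mx_diag [RHS]mxE [X in _ * X]mxE.
case: (splitP i) => [i1 e|i2 e].
  have -> : i = lshift N i1 by apply: val_inj.
  rewrite !row_mxEl; case: (splitP i1) => [i3 e3|i4 e4].
    have -> : i1 = lshift N i3 by apply: val_inj.
    rewrite !row_mxEl mxE /memb /= ltn_ord; exact: mulrC.
  have -> : i1 = rshift N i4 by apply: val_inj.
  rewrite !row_mxEr mxE /memb /=.
  have -> : (N + i4 < N)%N = false by lia.
  have -> : (N + i4 < N + N)%N by rewrite ltn_add2l.
  exact: mulrC.
have -> : i = rshift (N + N) i2 by apply: val_inj.
rewrite !row_mxEr mxE /memb /=.
have -> : (N + N + i2 < N)%N = false by lia.
have -> : (N + N + i2 < N + N)%N = false by lia.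
exact: mulrC.
Qed.

Lemma term (R : rcfType) N k (P Q Sm : 'M[R]_N) (ca cb cc : bool) : (k <= N)%N ->
  ek k (ca%:R *: (P *m P^T) + cb%:R *: (Q *m Q^T) + cc%:R *: (Sm *m Sm^T)) =
  \sum_(T : {set 'I_(N + N + N)} | #|T| == k)
     ([forall i in T, memb ca cb cc i]%:R *
      \det (msk T ((row_mx (row_mx P Q) Sm)^T *m row_mx (row_mx P Q) Sm))).
Proof.
move=> kN.
set W := row_mx (row_mx P Q) Sm.
set Xc := row_mx (row_mx (ca%:R *: P) (cb%:R *: Q)) (cc%:R *: Sm).
have bb (c : bool) : (c%:R * c%:R : R) = c%:R by case: c; rewrite ?mulr1 ?mulr0.
have E1 : ca%:R *: (P *m P^T) + cb%:R *: (Q *m Q^T) + cc%:R *: (Sm *m Sm^T) = Xc *m Xc^T.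
  have trZ n1 n2 (c : R) (X : 'M[R]_(n1, n2)) : (c *: X)^T = c *: X^T by apply/matrixP => i j; rewrite !mxE.
  rewrite /Xc !tr_row_mx !mul_row_col !trZ -!scalemxAl -!scalemxAr !scalerA !bb.
  by [].
rewrite E1 ek_Ek; last by [].
  2: by rewrite trmx_mul trmxK.
rewrite Ek_swap // ?Ek_minors; [|lia|lia].
apply: eq_bigr => T _.
pose m : 'rV[R]_(N + N + N) := \row_i ((memb ca cb cc i)%:R : R).
have XX i j : (Xc^T *m Xc) i j = m 0 i * (W^T *m W) i j * m 0 j.
  rewrite /Xc Xc_diag -/W trmx_mul tr_diag_mx mulmxA -(mulmxA (diag_mx m)).
  by rewrite mul_mx_diag [LHS]mxE mul_diag_mx [X in X * _]mxE.
have [/forall_inP H|/forall_inPn [i iT ni]] := boolP [forall i in T, memb ca cb cc i].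
  rewrite mul1r; apply: det_msk_eq => i j iT jT.
  by rewrite XX !mxE !H // mulr1 mul1r.
rewrite mul0r; apply: (det_msk_zero iT) => j.
by rewrite XX mxE (negbTE ni) !mul0r.
Qed.

Lemma memb_all N (T : {set 'I_(N + N + N)}) ca cb cc :
  [forall i in T, memb ca cb cc i] =
  (~~ [exists i in T, (i < N)%N] || ca) &&
  (~~ [exists i in T, (N <= i < N + N)%N] || cb) &&
  (~~ [exists i in T, (N + N <= i)%N] || cc).
Proof.
apply/idP/idP.
  move/forall_inP => H; rewrite -!implybE.
  apply/andP; split; [apply/andP; split|]; apply/implyP => /exists_inP [i iT hi];
    have := H i iT; rewrite /memb.
  - by rewrite hi.
  - have -> : (i < N)%N = false by lia.
    by have -> : (i < N + N)%N by lia.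
  - have -> : (i < N)%N = false by lia.
    by have -> : (i < N + N)%N = false by lia.
rewrite -!implybE => /andP [/andP [ha hb] hc]; apply/forall_inP => i iT; rewrite /memb.
case: ifP => h1.
  by apply: (implyP ha); apply/exists_inP; exists i.
case: ifP => h2.
  by apply: (implyP hb); apply/exists_inP; exists i => //; lia.
by apply: (implyP hc); apply/exists_inP; exists i => //; lia.
Qed.

Unset Implicit Arguments.

Theorem lemma5p4 (R : rcfType) (N : nat) (A B C : 'M[R]_N) (k : nat) :
  psd A -> psd B -> psd C -> (k <= N)%N ->
  ek k A + ek k B + ek k C + ek k (A + B + C)
    >= ek k (A + B) + ek k (B + C) + ek k (C + A).
Proof.
move=> HA HB HC kN.
have [P PA] := psd_chol HA; have [Q QB] := psd_chol HB; have [Sm SC] := psd_chol HC.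
have t c1 c2 c3 := term P Q Sm c1 c2 c3 kN.
have tA := t true false false; have tB := t false true false; have tC := t false false true.
have tABC := t true true true; have tAB := t true true false; have tBC := t false true true.
have tCA := t true false true.
rewrite ?scale1r ?scale0r ?addr0 ?add0r -?PA -?QB -?SC in tA tB tC tABC tAB tBC tCA.
rewrite addrC in tCA.
rewrite tA tB tC tABC tAB tBC tCA -subr_ge0 -!big_split /= -sumrB.
apply: sumr_ge0 => T _.
rewrite -!mulrDl -mulrBl; apply: mulr_ge0; last exact: minor_ge0.
rewrite !memb_all.
case: [exists i in T, (i < N)%N]; case: [exists i in T, (N <= i < N + N)%N];
  case: [exists i in T, (N + N <= i)%N]; rewrite /= ?mulr1n ?mulr0n.
all: rewrite ?addr0 ?add0r ?subrr ?subr0 ?ler01 //.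
by rewrite (_ : (1 + 1 + 1 + 1 - (1 + 1 + 1) : R) = 1) ?ler01 //; ring.
Qed.
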